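(* Let $D$ and $A$ be as in the context, and let $f$ be any map from the set $Y=\{y_1,\dots,y_d\}$ to $A$. Then there exists a derivation $\tau\in\mathrm{Der}(D,A)$ with $\tau|_Y=f$.
   Context: $p$ is an odd prime, $d\geq 2$. $D=\langle y_1,\dots,y_d\rangle$ is a finite $p$-group of exponent $p$ and nilpotency class $2$ with $|D/\Phi(D)|=p^d$ and $|\Phi(D)/\gamma_3(D)|=p^{\binom d2}$ (the free group of rank $d$ in the variety of class-$\le2$ exponent-$p$ groups). Let $S=\langle a\rangle\cong\mathrm{F}_p$ be the trivial $D$-module, and for $1\le j\le d$ let $\delta_j:D\to S$ be the homomorphism with $\delta_j(y_j)=a$ and $\delta_j(y_i)=0$ for $i\ne j$. Let $A=S\oplus\bigoplus_{i=1}^d\langle r_i\rangle$ with each $\langle r_i\rangle\cong\mathrm{F}_p$, with $D$-action $(la+\sum_i k_ir_i)^g=la+\sum_i k_i(r_i-\delta_i(g))$ for $g\in D$. Derivations $\tau:D\to A$ satisfy $\tau(xy)=\tau(x)^y+\tau(y)$. *)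

(* Defs.v *)
From mathcomp Require Import all_boot all_order all_algebra all_fingroup all_solvable.
Set Implicit Arguments. Unset Strict Implicit. Unset Printing Implicit Defensive.
Import GRing.Theory.
Local Open Scope ring_scope.

(* The module A = S (+) <r_1> (+) ... (+) <r_d> over F_p is represented as
   'F_p * 'rV['F_p]_d : the pair (l, k) stands for l a + sum_i k_i r_i.
   The homomorphisms delta_j : D -> S are given by their coefficient on a,
   i.e. delta j g \in 'F_p with delta_j(g) = (delta j g) a. *)
Definition modA (p d : nat) := ('F_p * 'rV['F_p]_d)%type.

(* (l a + sum k_i r_i)^g = l a + sum k_i (r_i - delta_i(g)) *)
Definition actA (gT : finGroupType) (p d : nat) (delta : 'I_d -> gT -> 'F_p)
  (v : modA p d) (g : gT) : modA p d :=
  (v.1 - \sum_(i < d) v.2 0 i * delta i g, v.2).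

Definition is_derivation (gT : finGroupType) (D : {set gT}) (A : Type)
  (addA : A -> A -> A) (act : A -> gT -> A) (tau : gT -> A) : Prop :=
  {in D &, forall x y, tau (x * y)%g = addA (act (tau x) y) (tau y)}.

(* Main.v *)
Require Import Defs.
From HB Require Import structures.
From mathcomp Require Import all_boot all_order all_algebra all_fingroup all_solvable.
From mathcomp Require Import ring.
Set Implicit Arguments. Unset Strict Implicit. Unset Printing Implicit Defensive.
Import GRing.Theory.
Section KGroup.
Variables (p d : nat) (M : 'M['F_p]_d).
Local Open Scope ring_scope.

Definition bf (u v : 'rV['F_p]_d) : 'F_p := (u *m M *m v^T) 0 0.

Lemma bfDl u u' v : bf (u + u') v = bf u v + bf u' v.
Proof. by rewrite /bf !mulmxDl mxE. Qed.
Lemma bfDr u v v' : bf u (v + v') = bf u v + bf u v'.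
Proof. by rewrite /bf linearD /= mulmxDr mxE. Qed.
Lemma bfNl u v : bf (- u) v = - bf u v.
Proof. by rewrite /bf !mulNmx mxE. Qed.
Lemma bf0l v : bf 0 v = 0.
Proof. by rewrite /bf !mul0mx mxE. Qed.
Lemma bf0r v : bf v 0 = 0.
Proof. by rewrite /bf trmx0 mulmx0 mxE. Qed.

Definition Kt := ('rV['F_p]_d * 'F_p)%type.
Definition Kmul (x y : Kt) : Kt := (x.1 + y.1, x.2 + y.2 - bf x.1 y.1).
Definition Kone : Kt := (0, 0).
Definition Kinv (x : Kt) : Kt := (- x.1, - x.2 - bf x.1 x.1).

Lemma KmulA : associative Kmul.
Proof.
case=> u a [v b] [w c]; rewrite /Kmul /=; congr (_, _); first by rewrite addrA.
rewrite bfDl bfDr; ring.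
Qed.
Lemma Kmul1 : left_id Kone Kmul.
Proof. by case=> u a; rewrite /Kmul /= bf0l !add0r subr0. Qed.
Lemma KmulV : left_inverse Kone Kinv Kmul.
Proof. by case=> u a; rewrite /Kmul /= addNr bfNl; congr (_, _); ring. Qed.

Definition K of phantom _ M := Kt.
Local Notation KM := (K (Phantom _ M)).
HB.instance Definition _ := Finite.on KM.
HB.instance Definition _ := Finite_isGroup.Build KM KmulA Kmul1 KmulV.
End KGroup.

Section KP.
Variables (p d : nat) (M : 'M['F_p]_d).
Local Notation KK := (K (Phantom _ M)).
Local Open Scope ring_scope.
Lemma KmulE (x y : KK) : (x * y)%g = Kmul M x y. Proof. by []. Qed.
Lemma KinvE (x : KK) : (x^-1)%g = Kinv M x. Proof. by []. Qed.
Lemma KoneE : (1 : KK)%g = (0, 0)%R. Proof. by []. Qed.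
Lemma Kexp (x : KK) n : (x ^+ n)%g = (x.1 *+ n, x.2 *+ n - bf M x.1 x.1 *+ 'C(n, 2))%R.
Proof.
elim: n => [|n IH]; first by rewrite expg0 KoneE /= !mulr0n subr0.
rewrite expgSr IH KmulE /Kmul /= binS bin1 mulrnDr.
have -> : bf M (x.1 *+ n) x.1 = bf M x.1 x.1 *+ n.
  elim: n {IH} => [|n IHn]; first by rewrite !mulr0n bf0l.
  by rewrite !mulrS bfDl IHn.
by rewrite !mulrSr; congr (_, _); ring.
Qed.
Lemma Kexp_p (x : KK) : prime p -> odd p -> (x ^+ p)%g = 1%g.
Proof.
move=> pr op.
have p0 : forall t : 'F_p, t *+ p = 0.
  by move=> t; rewrite -mulr_natr pchar_Fp_0 // mulr0.
rewrite Kexp KoneE bin2odd // mulrnA !p0 mul0rn subr0; congr (_, _).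
by apply/matrixP => i j; rewrite mulmxnE p0 mxE.
Qed.
Lemma Kcomm1 (x y : KK) : ([~ x, y]%g).1 = 0.
Proof.
by rewrite /commg /conjg !KmulE !KinvE /Kmul /Kinv /= (addrC x.1) addKr addNr.
Qed.
Lemma Kcent (c z : KK) : c.1 = 0 -> commute c z.
Proof.
case: c z => [u a] [v b] /= ->.
by rewrite /commute !KmulE /Kmul /= bf0l bf0r addrC (addrC a).
Qed.
End KP.
Section Gen.
Variable gT : finGroupType.
Local Open Scope group_scope.

Lemma gen_stable (D : {group gT}) (S : {set gT}) (P : pred gT) :
  D :=: <<S>> -> P 1 -> {in D &, forall x y, P x -> P y -> P (x * y)} ->
  {in S, forall x, P x} -> {in D, forall x, P x}.
Proof.
move=> DS P1 PM PS.
have gG : group_set [set x in D | P x].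
  apply/group_setP; split; first by rewrite inE group1 P1.
  move=> x y; rewrite !inE => /andP[xD Px] /andP[yD Py].
  by rewrite groupM // PM.
have sSD : S \subset D by rewrite DS subset_gen.
have : <<S>> \subset Group gG.
  rewrite gen_subG; apply/subsetP => x xS /=.
  by rewrite inE (subsetP sSD) // PS.
by rewrite -DS => /subsetP sub x /sub; rewrite inE => /andP[].
Qed.

Lemma card_gen_ab (I : finType) (x : I -> gT) (n : nat) (P : {set I}) :
  (0 < n)%N -> (forall i j, commute (x i) (x j)) -> (forall i, x i ^+ n = 1) ->
  (#|<<x @: P>>| <= n ^ #|P|)%N.
Proof.
move=> n0 cx xn.
have [k cP] : {k | #|P| = k} by exists #|P|.
elim: k P cP => [|k IH] P cP.
  by rewrite (cards0_eq cP) imset0 gen0 cards0 cards1.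
have [P0|[i Pi]] := set_0Vmem P; first by rewrite P0 cards0 in cP.
rewrite -(setD1K Pi) imsetU1.
have cPi : #|P :\ i| = k by move: cP; rewrite (cardsD1 i) Pi add1n => -[].
have IH' := IH _ cPi.
change (#|[set x i] <*> (x @: (P :\ i))| <= n ^ #|i |: (P :\ i)|)%N.
rewrite -joing_idr -joing_idl -/(cycle (x i)).
rewrite comm_joingE; last first.
  apply: centC; rewrite cycle_subG; suff: x i \in 'C(x @: (P :\ i)) by rewrite -cent_gen. apply/centP => y /imsetP[j _ ->].
  exact: cx.
have ci : (#|<[x i]>| <= n)%N by rewrite -orderE dvdn_leq // order_dvdn xn.
rewrite (setD1K Pi) cP expnS -cPi; apply: leq_trans (leq_mul ci IH').
by rewrite mul_cardG leq_pmulr // cardG_gt0.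
Qed.
End Gen.

Local Open Scope group_scope.
Lemma class2_bound (gT : finGroupType) (d n : nat) (x : 'I_d -> gT) (H : {group gT}) :
  (0 < n)%N -> H :=: <<[set x i | i : 'I_d]>> ->
  {in H, forall h, h ^+ n = 1} ->
  {in H &, forall a b, [~ a, b] \in 'C(H)} ->
  (#|H| <= n ^ d * n ^ 'C(d, 2))%N.
Proof.
move=> n0 defH Hn Hc.
have xH i : x i \in H by rewrite defH mem_gen // imset_f.
pose T2 := [set t : 2.-tuple 'I_d | sorted ltn (map val t)].
pose c (t : 2.-tuple 'I_d) := [~ x (tnth t ord0), x (tnth t ord_max)].
pose C := <<c @: T2>>.
have cH t : c t \in H by rewrite groupR.
have cC t : c t \in 'C(H) by rewrite Hc.
have sCH : C \subset H by rewrite gen_subG; apply/subsetP => _ /imsetP[t _ ->].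
have sCC : C \subset 'C(H).
  by rewrite gen_subG; apply/subsetP => _ /imsetP[t _ ->].
have nCH : H \subset 'N(C) by rewrite cents_norm // centsC.
have cardC : (#|C| <= n ^ 'C(d, 2))%N.
  rewrite -(card_ltn_sorted_tuples 2 d) card_gen_ab //.
    by move=> i j; exact: (centP (cC i)) _ (cH j).
  by move=> t; rewrite Hn.
have xxC i j : [~ x i, x j] \in C.
  have key (a b : 'I_d) : (a < b)%N -> [~ x a, x b] \in C.
    move=> ab; have tT : [tuple a; b] \in T2 by rewrite inE /= andbT.
    by rewrite mem_gen // (imset_f c tT).
  case: (ltngtP i j) => [ij|ji|/val_inj ->]; first exact: key.
    by rewrite -invgR groupV key.
  by rewrite commgg group1.
pose qx i := coset C (x i).
have qH : H / C = <<[set qx i | i : 'I_d]>>.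
  have sXN : [set x i | i : 'I_d] \subset 'N(C).
    by apply: subset_trans nCH; rewrite defH subset_gen.
  rewrite {1}defH quotient_gen // /quotient morphimEsub //.
  by rewrite -imset_comp.
have cardQ : (#|H / C| <= n ^ d)%N.
  rewrite qH.
  have -> : [set qx i | i : 'I_d] = qx @: [set: 'I_d].
    by apply/setP => z; apply/imsetP/imsetP => -[i _ ->]; exists i.
  have := @card_gen_ab _ _ qx n [set: 'I_d] n0.
  rewrite cardsT card_ord; apply.
    move=> i j; apply/commgP; rewrite -morphR ?(subsetP nCH) //.
    by apply/eqP; apply: coset_id; apply: xxC.
  by move=> i; rewrite -morphX ?(subsetP nCH) // Hn // morph1.
rewrite -(Lagrange sCH) -card_quotient // mulnC.
exact: leq_mul.
Qed.

Theorem lemma3p6 (p d : nat) (gT : finGroupType) (D : {group gT})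
  (y : 'I_d -> gT) (delta : 'I_d -> gT -> 'F_p) (f : gT -> modA p d) :
  prime p -> odd p -> (2 <= d)%N ->
  D :=: <<[set y i | i : 'I_d]>>%g ->
  exponent D = p ->
  nilpotent D -> nil_class D = 2 ->
  #|D / 'Phi(D)|%g = (p ^ d)%N ->
  #|'Phi(D) / 'L_3(D)|%g = (p ^ 'C(d, 2))%N ->
  (forall j, {in D &, {morph delta j : u v / (u * v)%g >-> (u + v)%R}}) ->
  (forall i j, delta j (y i) = ((i == j)%:R)%R) ->
  exists tau : gT -> modA p d,
    is_derivation D (fun u v => (u + v)%R) (actA delta) tau /\
    (forall x, x \in [set y i | i : 'I_d] -> tau x = f x).
Proof.
move=> pr op d2 defD expD nilD clD cDPhi cPhiL dM dy.
have p0 : (0 < p)%N by apply: prime_gt0.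
have yD a : y a \in D by rewrite defD mem_gen // imset_f.
have L3 : 'L_3(D) = 1.
  by apply/(lcn_nil_classP 2 nilD); rewrite clD.
have cardD : #|D| = (p ^ d * p ^ 'C(d, 2))%N.
  rewrite -cDPhi -cPhiL L3 (@card_quotient _ 1%G) ?norms1 // indexg1.
  by rewrite card_quotient ?normal_norm ?Phi_normal // mulnC Lagrange ?Phi_sub.
pose Cm : 'M['F_p]_d := (\matrix_(a, i) (f (y a)).2 0 i)%R.
pose KK := K (Phantom _ Cm).
pose k (a : 'I_d) : KK := (delta_mx 0 a, (f (y a)).1)%R.
pose z a : (gT * KK)%type := (y a, k a).
pose H := <<[set z a | a : 'I_d]>>%G.
have sHX : H \subset setX D [set: KK].
  rewrite gen_subG; apply/subsetP => _ /imsetP[a _ ->].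
  by rewrite inE yD inE.
have zH a : z a \in H by rewrite mem_gen // imset_f.
have expP (h : (gT * KK)%type) n : (h ^+ n)%g = (h.1 ^+ n, h.2 ^+ n)%g.
  elim: n => [|n IH]; first by [].
  by rewrite !expgS IH.
have cardH : (#|H| <= #|D|)%N.
  rewrite cardD; apply: (class2_bound (x := z)) => //.
    move=> h hH; rewrite expP.
    have := subsetP sHX h hH; rewrite inE => /andP[h1D _].
    have := expg_exponent h1D; rewrite expD => e1.
    by rewrite e1 Kexp_p.
  move=> a b aH bH; apply/centP => c cH.
  have := subsetP sHX a aH; rewrite inE => /andP[a1D _].
  have := subsetP sHX b bH; rewrite inE => /andP[b1D _].
  have := subsetP sHX c cH; rewrite inE => /andP[c1D _].
  have c1 : commute [~ a.1, b.1] c.1.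
    have m : [~ [~ a.1, b.1], c.1] \in 'L_3(D).
      by rewrite lcnSn; apply: mem_commg => //; apply: mem_commg.
    by apply/commgP; rewrite L3 in m; move/set1P: m => ->.
  have c2 : commute [~ a.2, b.2] c.2 by apply: Kcent; apply: Kcomm1.
  exact: (congr2 pair c1 c2).
have imH : fst @: H = D.
  apply/eqP; rewrite eqEsubset; apply/andP; split.
    apply/subsetP => _ /imsetP[h hH ->].
    by have := subsetP sHX h hH; rewrite inE => /andP[].
  apply/subsetP => g gD.
  apply: (gen_stable (S := [set y i | i : 'I_d]) (P := fun g => g \in fst @: H)) gD => //.
  - by apply/imsetP; exists 1%g.
  - move=> x1 x2 _ _ /imsetP[h1 h1H ->] /imsetP[h2 h2H ->].
    by apply/imsetP; exists (h1 * h2)%g; rewrite ?groupM.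
  - by move=> _ /imsetP[a _ ->]; apply/imsetP; exists (z a).
have injH : {in H &, injective fst}.
  by apply/imset_injP; rewrite eqn_leq leq_imset_card imH cardH.
pose rho (g : gT) : KK := (odflt 1 [pick h in H | h.1 == g]).2%g.
have rhoE h : h \in H -> rho h.1 = h.2.
  move=> hH; rewrite /rho; case: pickP => [h' /andP[h'H /eqP e]|/(_ h)].
    by rewrite (injH _ _ h'H hH e).
  by rewrite hH eqxx.
have inH g : g \in D -> exists2 h, h \in H & h.1 = g.
  by rewrite -imH => /imsetP[h hH ->]; exists h.
have rhoM : {in D &, forall x1 x2, rho (x1 * x2)%g = (rho x1 * rho x2)%g}.
  move=> x1 x2 /inH[h1 h1H <-] /inH[h2 h2H <-].
  by rewrite !rhoE // -[(h1.1 * h2.1)%g]/((h1 * h2)%g.1) rhoE ?groupM.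
have rho1 : rho 1%g = 1%g by rewrite -[1%g]/((1 : (gT * KK)%type).1) rhoE.
have rhoy a : rho (y a) = k a by rewrite -[y a]/((z a).1) rhoE.
pose dv (g : gT) : 'rV['F_p]_d := (\row_j delta j g)%R.
have delta1 j : delta j 1%g = 0%R.
  have := dM j 1%g 1%g (group1 D) (group1 D); rewrite mulg1.
  by move/(congr1 (fun t => t - delta j 1%g)%R); rewrite addrK subrr.
have dvM : {in D &, forall x1 x2, dv (x1 * x2)%g = (dv x1 + dv x2)%R}.
  by move=> x1 x2 x1D x2D; apply/matrixP => i j; rewrite !mxE dM.
have rho1dv : {in D, forall g, (rho g).1 = dv g}.
  move=> g gD; apply/eqP.
  apply: (gen_stable (S := [set y i | i : 'I_d]) (P := fun g => (rho g).1 == dv g)) gD => //.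
  - by rewrite rho1; apply/eqP/matrixP => i j; rewrite !mxE delta1.
  - move=> x1 x2 x1D x2D /eqP e1 /eqP e2.
    by rewrite rhoM // dvM // -e1 -e2.
  - move=> _ /imsetP[a _ ->]; rewrite rhoy; apply/eqP/matrixP => i j.
    by rewrite !mxE dy ord1 eqxx /= eq_sym.
pose tau (g : gT) : modA p d := ((rho g).2, dv g *m Cm)%R.
exists tau; split.
  move=> x1 x2 x1D x2D.
  rewrite /tau /actA /= rhoM // dvM // KmulE /Kmul /= mulmxDl !rho1dv //.
  congr (_, _); rewrite /bf [in LHS]mxE /=.
  rewrite (eq_bigr (fun i => (dv x1 *m Cm) 0 i * delta i x2)%R); last first.
    by move=> i _; congr (_ * _)%R; rewrite !mxE.
  by rewrite addrAC.
move=> _ /imsetP[a _ ->].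
rewrite /tau -rho1dv // rhoy /= -rowE.
have -> : row a Cm = (f (y a)).2.
  by apply/matrixP => i j; rewrite !mxE ord1.
by case: (f (y a)).
Qed.
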